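(* For every integer $n\ge 0$, \[ \sum_{k=0}^{n}(-4)^k\frac{\binom{n}{k}}{\binom{2k}{k}}H_{2k} =\frac{2H_{2n}-H_n}{2(2n-1)}-\frac{4n}{(2n-1)^2}. \]
   Context: For an integer $m\ge 0$, $H_m$ denotes the $m$-th harmonic number: $H_0=0$ and $H_m=\sum_{j=1}^m \frac1j$ for $m\ge1$. $\binom{n}{k}$ is the usual binomial coefficient. *)

(* Defs.v *)
From HB Require Import structures.
From mathcomp Require Import all_boot all_order all_algebra.
Set Implicit Arguments. Unset Strict Implicit. Unset Printing Implicit Defensive.
Import Order.TTheory GRing.Theory Num.Theory.
Local Open Scope ring_scope.

Definition harmonic (m : nat) : rat := \sum_(1 <= j < m.+1) (j%:R)^-1.

(* Main.v *)
Require Import Defs.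
From HB Require Import structures.
From mathcomp Require Import all_boot all_order all_algebra.
From mathcomp Require Import ring lra zify.
Import Order.TTheory GRing.Theory Num.Theory.
Local Open Scope ring_scope.

Definition tt_ (n k : nat) : rat :=
  (-4 : rat) ^+ k * ('C(n, k)%:R / 'C(2 * k, k)%:R) * harmonic (2 * k).

Definition sq (n k : nat) : rat :=
  - ((n%:R+1)*(2*n%:R+3)/((2*n%:R-1)*(2*n%:R+1)))
  + ((4*n%:R+1)/(2*n%:R+1) + 8/(2*n%:R-1))*k%:R - 4/(2*n%:R-1)*k%:R^+2.

Definition Fk (n k : nat) : rat :=
  (-4 : rat) ^+ k * ('C(n.+1, k)%:R / 'C(2 * k, k)%:R) *
  (- (k%:R*(2*k%:R-1)) * harmonic (2*k) + sq n k).

Lemma harmS m : harmonic m.+1 = harmonic m + (m%:R + 1)^-1.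
Proof. by rewrite /harmonic big_nat_recr //= -natr1. Qed.

Lemma harm2S k : harmonic (2 * k.+1) =
  harmonic (2 * k) + (2 * k%:R + 1)^-1 + (2 * k%:R + 2)^-1.
Proof.
have -> : (2 * k.+1 = (2 * k).+1.+1)%N by rewrite mulnS.
rewrite !harmS.
have e1 : ((2*k)%:R : rat) = 2 * k%:R by rewrite natrM.
rewrite -natr1 e1 -addrA -[_ + 1 + 1]addrA.
by rewrite addrA.
Qed.

Lemma nz2m1 n : (2 * n%:R - 1 : rat) != 0.
Proof.
rewrite subr_eq0.
have -> : (2 * n%:R : rat) = (2*n)%:R by rewrite natrM.
rewrite (_ : (1 : rat) = 1%:R) // eqr_nat; lia.
Qed.

Lemma nzp (m : nat) c : (0 < c)%N -> (m%:R + c%:R : rat) != 0.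
Proof. move=> hc; rewrite -natrD pnatr_eq0; lia. Qed.

Lemma cbin k : ((k.+1 * k.+1) * 'C(2 * k.+1, k.+1) = (2*k).+2 * (2*k).+1 * 'C(2*k, k))%N.
Proof.
have h1 := mul_bin_left (2 * k.+1) k.
have h2 := mul_bin_down (2 * k.+1) k.
have h3 := mul_bin_down (2 * k).+1 k.
have e1 : (2 * k.+1 - k = k.+2)%N by lia.
have e2 : ((2 * k.+1).-1 = (2*k).+1)%N by rewrite mulnS.
have e3 : ((2 * k).+1 - k = k.+1)%N by lia.
rewrite e1 in h1; rewrite e1 e2 in h2; rewrite e3 /= in h3.
nia.
Qed.

Lemma step_k n k : (k <= n.+1)%N ->
  (n.+1)%:R * ((2*n%:R+1) * tt_ n.+1 k - (2*n%:R-1) * tt_ n k) = Fk n k.+1 - Fk n k.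
Proof.
move=> hk.
rewrite /Fk /tt_ harm2S.
have hc0 : ('C(2*k, k)%:R : rat) != 0 by rewrite pnatr_eq0 -lt0n bin_gt0; lia.
have hc : ('C(2 * k.+1, k.+1)%:R : rat) =
   (2*k%:R+2)*(2*k%:R+1)/(k%:R+1)^+2 * 'C(2*k, k)%:R.
  have := cbin k => /(congr1 (fun x : nat => (x%:R : rat))).
  rewrite !natrM -!natr1 !natrM => h.
  have hk1 : (k%:R + 1 : rat) != 0 by exact: (nzp k 1).
  apply: (mulfI (mulf_neq0 hk1 hk1)). rewrite h. field. exact: hk1.
have hb' : ('C(n.+1, k.+1)%:R : rat) = (n%:R+1-k%:R)/(k%:R+1) * 'C(n.+1, k)%:R.
  have := mul_bin_left n.+1 k => /(congr1 (fun x : nat => (x%:R : rat))).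
  rewrite !natrM natrB // -!natr1 => h.
  have hk1 : (k%:R + 1 : rat) != 0 by exact: (nzp k 1).
  apply: (mulfI hk1). rewrite h. field. exact: hk1.
have hb : ('C(n, k)%:R : rat) = (n%:R+1-k%:R)/(n%:R+1) * 'C(n.+1, k)%:R.
  have := mul_bin_down n.+1 k => /(congr1 (fun x : nat => (x%:R : rat))).
  rewrite !natrM natrB // -!natr1 /= => h.
  have hn1 : (n%:R + 1 : rat) != 0 by exact: (nzp n 1).
  apply: (mulfI hn1). rewrite h. field. exact: hn1.
rewrite hc hb' hb /sq exprS -!natr1.
have := nz2m1 n. have := nzp n 1 erefl. have := nzp k 1 erefl.
have hn3 : (2*n%:R+1 : rat) != 0.
  have -> : (2 * n%:R : rat) = (2*n)%:R by rewrite natrM.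
  exact: (nzp _ 1).
have hk3 : (2*k%:R+1 : rat) != 0.
  have -> : (2 * k%:R : rat) = (2*k)%:R by rewrite natrM.
  exact: (nzp _ 1).
have hk4 : (2*k%:R+2 : rat) != 0.
  have -> : (2 * k%:R : rat) = (2*k)%:R by rewrite natrM.
  exact: (nzp _ 2).
move: hn3 hk3 hk4 hc0.
set H := harmonic (2*k).
set C := ('C(2*k,k)%:R : rat). set B := ('C(n.+1,k)%:R : rat).
set K := (k%:R : rat). set N := (n%:R : rat). set E := ((-4 : rat) ^+ k).
move=> hn3 hk3 hk4 hc0' hk1 hn1 h2n. field.
by rewrite h2n hn3 hc0' hk4 hk3 hk1 hn1.
Qed.

Definition SS (n : nat) : rat := \sum_(0 <= k < n.+1) tt_ n k.
Definition RR (n : nat) : rat :=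
  (2 * harmonic (2 * n) - harmonic n) / (2 * (2 * n%:R - 1))
    - 4 * n%:R / (2 * n%:R - 1) ^+ 2.

Lemma step n : (n.+1)%:R * ((2*n%:R+1) * SS n.+1 - (2*n%:R-1) * SS n) = 0 - sq n 0.
Proof.
have e : SS n = \sum_(0 <= k < n.+2) tt_ n k.
  rewrite /SS [in RHS]big_nat_recr //= {3}/tt_ bin_small //.
  by rewrite mul0r mulr0 mul0r addr0.
have t := @telescope_sumr_eq _ 0 n.+2 (Fk n)
  (fun k => (n.+1)%:R * ((2*n%:R+1) * tt_ n.+1 k - (2*n%:R-1) * tt_ n k)) erefl.
rewrite e /SS !mulr_sumr -sumrB mulr_sumr t.
- rewrite /Fk bin_small // mul0r mulr0 mul0r /= expr0 mul1r bin0 !mul0r.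
  by rewrite muln0 bin0; field.
- by move=> k /andP[_ hk]; apply: step_k; lia.
Qed.

Lemma SSRR n : SS n = RR n.
Proof.
elim: n => [|n IH].
  rewrite /SS /RR /tt_ big_nat1 /harmonic !muln0 !big_geq //.
have h := step n.
rewrite IH in h.
have hn1 : (n%:R + 1 : rat) != 0 by exact: (nzp n 1).
have hn3 : (2*n%:R+1 : rat) != 0.
  have -> : (2 * n%:R : rat) = (2*n)%:R by rewrite natrM.
  exact: (nzp _ 1).
have hn4 : (2*n%:R+2 : rat) != 0.
  have -> : (2 * n%:R : rat) = (2*n)%:R by rewrite natrM.
  exact: (nzp _ 2).
have h2n := nz2m1 n.
have hX : SS n.+1 = ((0 - sq n 0)/(n%:R+1) + (2*n%:R-1)*RR n)/(2*n%:R+1).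
  rewrite -h -natr1. field. by rewrite hn1 hn3.
rewrite hX /RR harm2S harmS /sq -!natr1.
move: hn1 hn3 hn4 h2n.
set A := harmonic (2*n). set B := harmonic n. set N := (n%:R : rat).
move=> hn1 hn3 hn4 h2n.
have e : 2 * (N + 1) - 1 = 2 * N + 1 by ring.
field. by rewrite e hn1 hn4 h2n hn3.
Qed.

Theorem theorem1 (n : nat) :
  \sum_(0 <= k < n.+1)
      (-4 : rat) ^+ k * ('C(n, k)%:R / 'C(2 * k, k)%:R) * harmonic (2 * k)
  = (2 * harmonic (2 * n) - harmonic n) / (2 * (2 * n%:R - 1))
    - 4 * n%:R / (2 * n%:R - 1) ^+ 2.
Proof. exact: (SSRR n). Qed.
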